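(* Let $\mathcal{X}$ be a connected $n$-premaniplex and let $(\mathcal{Y},\eta)$ be an $(n,m)$-voltage operator that preserves connectivity. Let $\gamma\in\operatorname{Aut}(\mathcal{X}\rtimes_\eta\mathcal{Y})$. If there exist a flag $(x_0,y_0)$ and a flag $x_1\in\mathcal{X}$ with $(x_0,y_0)\gamma=(x_1,y_0)$, then there is $\alpha\in\operatorname{Aut}(\mathcal{X})$ such that $(x,y)\gamma=(x\alpha,y)$ for all flags $(x,y)$ of $\mathcal{X}\rtimes_\eta\mathcal{Y}$.
   Context: An $n$-premaniplex is an edge-coloured graph (semi-edges and parallel edges allowed) with colours $\{0,\dots,n-1\}$ such that every vertex (flag) is the start of exactly one dart of each colour, and for $|i-j|\ge2$ alternating $i,j$-paths of length 4 are closed; $x^i$ is the $i$-adjacent flag of $x$. $\mathcal{C}^n=\langle r_0,\dots,r_{n-1}\mid r_i^2,\ (r_ir_j)^2\ (|i-j|\ge2)\rangle$ acts on flags by $r_ix=x^i$. Automorphisms (colour-preserving graph automorphisms) act on the right and commute with this action. For a flag $y$ of an $m$-premaniplex $\mathcal{Y}$ and $\omega\in\mathcal{C}^m$, $W_\omega(y)$ is the homotopy class of paths from $y$ whose colour sequence $i_1,\dots,i_k$ satisfies $r_{i_k}\cdots r_{i_1}=\omega$; these form the fundamental groupoid $\Pi(\mathcal{Y})$. A voltage assignment $\eta:\Pi(\mathcal{Y})\to\mathcal{C}^n$ satisfies $\eta(W_1W_2)=\eta(W_2)\eta(W_1)$; $(\mathcal{Y},\eta)$ is an $(n,m)$-voltage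 operator. $\mathcal{X}\rtimes_\eta\mathcal{Y}$ has flags $\mathcal{X}\times\mathcal{Y}$ and $(x,y)^i=(\eta(W_{r_i}(y))x,r_iy)$, $i\in\{0,\dots,m-1\}$; hence $\omega(x,y)=(\eta(W_\omega(y))x,\omega y)$. The operator preserves connectivity if $\mathcal{X}\rtimes_\eta\mathcal{Y}$ is connected whenever $\mathcal{X}$ is. Standing convention: $\mathcal{Y}$ has a spanning tree all of whose darts have trivial voltage. *)

(* Defs.v *)
From mathcomp Require Import all_boot.
From Stdlib Require Import Relation_Operators.
Set Implicit Arguments. Unset Strict Implicit. Unset Printing Implicit Defensive.

Definition far (k : nat) (i j : 'I_k) : bool := (i.+2 <= j) || (j.+2 <= i).

(* An n-premaniplex: a type of flags with, for each colour i < n, the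
   i-adjacency map x |-> x^i.  "Exactly one dart of each colour at each flag"
   (semi-edges = fixed points allowed) means adj i is an involution;
   alternating i,j-paths of length 4 (|i-j|>=2) are closed. *)
Record premaniplex (n : nat) := Premaniplex {
  flag :> Type;
  adj : 'I_n -> flag -> flag;
  adj_inv : forall i x, adj i (adj i x) = x;
  adj_alt : forall i j x, far i j -> adj j (adj i (adj j (adj i x))) = x
}.

(* Action of a path (colour sequence i_1,...,i_k, i_1 applied first), i.e.
   of the word r_{i_k} ... r_{i_1}, on flags. *)
Definition actw (F : Type) (k : nat) (r : 'I_k -> F -> F) (p : seq 'I_k) (x : F) : F :=
  foldl (fun z i => r i z) x p.

(* Equality in the Coxeter group C^k = < r_i | r_i^2, (r_i r_j)^2 (|i-j|>=2) >,
   on words written as colour sequences (path order). *)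
Inductive coxstep (k : nat) : seq 'I_k -> seq 'I_k -> Prop :=
| coxstep_sq (u v : seq 'I_k) (i : 'I_k) : coxstep (u ++ [:: i; i] ++ v) (u ++ v)
| coxstep_alt (u v : seq 'I_k) (i j : 'I_k) :
    far i j -> coxstep (u ++ [:: i; j; i; j] ++ v) (u ++ v).

Definition coxeq (k : nat) : seq 'I_k -> seq 'I_k -> Prop :=
  clos_refl_sym_trans (seq 'I_k) (@coxstep k).

Definition connected_fs (F : Type) (k : nat) (r : 'I_k -> F -> F) : Prop :=
  forall x x' : F, exists p : seq 'I_k, actw r p x = x'.

Definition connected (k : nat) (X : premaniplex k) : Prop := connected_fs (@adj k X).

(* Automorphism (acting on the right, x |-> x g): colour-preserving bijection. *)
Definition is_automorphism_fs (F : Type) (k : nat) (r : 'I_k -> F -> F) (g : F -> F) : Prop :=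
  bijective g /\ forall i x, g (r i x) = r i (g x).

Definition is_automorphism (k : nat) (X : premaniplex k) (g : X -> X) : Prop :=
  is_automorphism_fs (@adj k X) g.

(* A voltage assignment on the fundamental groupoid of Y: the homotopy class
   W_omega(y) of paths from y is determined by (y, omega), omega in C^m, and
   represented by any path p (colour sequence) with word omega.  The voltage
   eta y p is a word representing an element of C^n.  Conditions: eta is well
   defined on homotopy classes, and eta(W1 W2) = eta(W2) eta(W1)  (in path
   order: the voltage word of W1 followed by that of W2). *)
Definition voltage_assignment (n m : nat) (Y : premaniplex m)
    (eta : Y -> seq 'I_m -> seq 'I_n) : Prop :=
  (forall y p q, coxeq p q -> coxeq (eta y p) (eta y q)) /\
  (forall y p q, coxeq (eta y (p ++ q)) (eta y p ++ eta (actw (@adj m Y) p y) q)).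

Definition vprod_adj (n m : nat) (X : premaniplex n) (Y : premaniplex m)
    (eta : Y -> seq 'I_m -> seq 'I_n) (i : 'I_m) (xy : X * Y) : X * Y :=
  (actw (@adj n X) (eta xy.2 [:: i]) xy.1, adj i xy.2).
Arguments vprod_adj {n m} X {Y} eta i xy.

Definition preserves_connectivity (n m : nat) (Y : premaniplex m)
    (eta : Y -> seq 'I_m -> seq 'I_n) : Prop :=
  forall X : premaniplex n, connected X -> connected_fs (vprod_adj X eta).

(* Walks along darts from a set T of darts (dart = (flag, colour)). *)
Fixpoint walk_in (m : nat) (Y : premaniplex m) (T : Y -> 'I_m -> Prop)
    (y : Y) (p : seq 'I_m) : Prop :=
  match p with
  | [::] => True
  | i :: p' => T y i /\ walk_in T (adj i y) p'
  end.

(* T is (the dart set of) a spanning tree of Y: closed under reversal of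
   darts, contains no semi-edge, connects all flags, and has no cycle (no
   nonempty closed walk without backtracking).  Since each flag has exactly
   one dart of each colour, a walk is determined by its start and its colour
   sequence, and it backtracks iff two consecutive colours coincide. *)
Definition spanning_tree (m : nat) (Y : premaniplex m) (T : Y -> 'I_m -> Prop) : Prop :=
  [/\ (forall y i, T y i -> T (adj i y) i),
      (forall y i, T y i -> adj i y <> y),
      (forall y y', exists p, walk_in T y p /\ actw (@adj m Y) p y = y') &
      (forall y p, p <> [::] -> sorted (fun a b => a != b) p -> walk_in T y p ->
                   actw (@adj m Y) p y <> y)].

Definition trivial_spanning_tree (n m : nat) (Y : premaniplex m)
    (eta : Y -> seq 'I_m -> seq 'I_n) : Prop :=
  exists T : Y -> 'I_m -> Prop,
    spanning_tree T /\ forall y i, T y i -> coxeq (eta y [:: i]) [::].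

(* Main.v *)
Require Import Defs.
From mathcomp Require Import all_boot.
From Stdlib Require Import Relation_Operators FunctionalExtensionality PropExtensionality ProofIrrelevance.

Section Aux.

Lemma actw_cat (F : Type) (k : nat) (r : 'I_k -> F -> F) p q x :
  actw r (p ++ q) x = actw r q (actw r p x).
Proof. by rewrite /actw foldl_cat. Qed.

Lemma cox_app (k : nat) (a b c : seq 'I_k) : coxeq a b -> coxeq (a ++ c) (b ++ c).
Proof.
elim=> [x y st|x|x y _ IH|x y z _ IH1 _ IH2].
- apply: rst_step; case: st => [u v i|u v i j f].
  + rewrite -!catA; exact: coxstep_sq.
  + rewrite -!catA; exact: coxstep_alt.
- exact: rst_refl.
- exact: rst_sym.
- exact: rst_trans IH2.
Qed.

Lemma cox_rev (k : nat) (w : seq 'I_k) : coxeq (w ++ rev w) [::].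
Proof.
elim/last_ind: w => [|w i IH]; first exact: rst_refl.
rewrite rev_rcons cat_rcons.
apply: rst_trans IH; apply: rst_step.
have -> : w ++ i :: i :: rev w = w ++ [:: i; i] ++ rev w by [].
exact: coxstep_sq.
Qed.

Lemma actw_cox (k : nat) (X : premaniplex k) p q :
  coxeq p q -> forall x : X, actw (@adj k X) p x = actw (@adj k X) q x.
Proof.
elim=> [a b st|a|a b _ IH|a b c _ IH1 _ IH2] x.
- case: st => [u v i|u v i j f]; rewrite !actw_cat /=.
  + by rewrite /actw /= adj_inv.
  + by rewrite /actw /= adj_alt.
- by [].
- by rewrite IH.
- by rewrite IH1 IH2.
Qed.


Arguments cox_app {k a b} c.
Arguments actw_cox {k X p q}.
Arguments cox_rev {k}.
Variable n : nat.

Definition Cf := {S : seq 'I_n -> Prop | exists w, S = coxeq w}.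

Lemma Cf_ext (s t : Cf) : sval s = sval t -> s = t.
Proof.
case: s t => [S hS] [T hT] /= e; subst T; f_equal; apply: proof_irrelevance.
Qed.

Lemma cls_eq (a b : seq 'I_n) : coxeq a b -> coxeq a = coxeq b.
Proof.
move=> h; apply: functional_extensionality => v; apply: propositional_extensionality.
split=> h2; first exact: rst_trans (rst_sym _ _ _ _ h) h2.
exact: rst_trans h h2.
Qed.

Definition cadjP (i : 'I_n) (S : seq 'I_n -> Prop) := fun v => exists u, S u /\ coxeq (u ++ [:: i]) v.

Lemma cadjP_cls i w : cadjP i (coxeq w) = coxeq (w ++ [:: i]).
Proof.
apply: functional_extensionality => v; apply: propositional_extensionality.
split.
- case=> u [h1 h2]; exact: rst_trans (cox_app _ h1) h2.
- move=> h; exists w; split => //; exact: rst_refl.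
Qed.

Lemma cadj_ok i S : (exists w, S = coxeq w) -> exists w, cadjP i S = coxeq w.
Proof. case=> w ->; exists (w ++ [:: i]); exact: cadjP_cls. Qed.

Definition cadj (i : 'I_n) (s : Cf) : Cf := exist _ (cadjP i (sval s)) (@cadj_ok i (sval s) (proj2_sig s)).

Definition cls (w : seq 'I_n) : Cf := exist _ (coxeq w) (ex_intro _ w erefl).

Lemma cadj_cls i w : cadj i (cls w) = cls (w ++ [:: i]).
Proof. apply: Cf_ext => /=; exact: cadjP_cls. Qed.

Lemma cadj_inv i s : cadj i (cadj i s) = s.
Proof.
case: s => S hS; have [w ew] := hS.
have -> : exist _ S hS = cls w by apply: Cf_ext.
rewrite !cadj_cls; apply: Cf_ext => /=; apply: esym; apply: cls_eq.
apply: rst_sym; rewrite -catA /=; apply: rst_step.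
have := coxstep_sq w [::] i; rewrite !cats0; exact.
Qed.

Lemma cadj_alt i j s : far i j -> cadj j (cadj i (cadj j (cadj i s))) = s.
Proof.
move=> f; case: s => S hS; have [w ew] := hS.
have -> : exist _ S hS = cls w by apply: Cf_ext.
rewrite !cadj_cls; apply: Cf_ext => /=; apply: esym; apply: cls_eq.
apply: rst_sym; rewrite -!catA /=; apply: rst_step.
have := coxstep_alt w [::] f; rewrite !cats0; exact.
Qed.

Definition Cay : premaniplex n := @Premaniplex n Cf cadj cadj_inv cadj_alt.

Lemma actw_cls p w : actw (@adj n Cay) p (cls w) = cls (w ++ p).
Proof.
elim: p w => [|i p IH] w /=; first by rewrite cats0.
rewrite /actw /= (cadj_cls i w).
by have := IH (w ++ [:: i]); rewrite /actw => ->; rewrite -catA.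
Qed.

Lemma Cay_conn : connected Cay.
Proof.
move=> s t.
case: s => S hS; have [w ew] := hS.
case: t => T hT; have [w' ew'] := hT.
have -> : exist _ S hS = cls w by apply: Cf_ext.
have -> : exist _ T hT = cls w' by apply: Cf_ext.
exists (rev w ++ w'); rewrite actw_cls catA; apply: Cf_ext => /=.
apply: cls_eq; have := cox_app w' (cox_rev w); by [].
Qed.

End Aux.
Arguments cox_app {k a b} c.
Arguments actw_cox {k X p q}.
Arguments cox_rev {k}.

Fixpoint Ew {n m : nat} {Y : premaniplex m} (eta : Y -> seq 'I_m -> seq 'I_n)
   (y : Y) (p : seq 'I_m) : seq 'I_n :=
  match p with
  | [::] => [::]
  | i :: p' => eta y [:: i] ++ Ew eta (adj i y) p'
  end.

Lemma actw_vprod (n m : nat) (X : premaniplex n) (Y : premaniplex m)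
    (eta : Y -> seq 'I_m -> seq 'I_n) p (x : X) (y : Y) :
  actw (vprod_adj X eta) p (x, y) = (actw (@adj n X) (Ew eta y p) x, actw (@adj m Y) p y).
Proof.
elim: p x y => [|i p IH] x y //=.
rewrite /actw /=; have := IH (actw (@adj n X) (eta y [:: i]) x) (adj i y).
rewrite /actw => ->; by rewrite foldl_cat.
Qed.

Theorem proposition4p2 (n m : nat) (X : premaniplex n) (Y : premaniplex m)
    (eta : Y -> seq 'I_m -> seq 'I_n) :
  voltage_assignment eta ->
  trivial_spanning_tree eta ->
  preserves_connectivity eta ->
  connected X ->
  forall gamma : X * Y -> X * Y,
    is_automorphism_fs (vprod_adj X eta) gamma ->
    (exists (x0 : X) (y0 : Y) (x1 : X), gamma (x0, y0) = (x1, y0)) ->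
    exists alpha : X -> X,
      is_automorphism alpha /\ forall (x : X) (y : Y), gamma (x, y) = (alpha x, y).
Proof.
move=> _ _ PC CX gamma [gbij gcomm] [x0 [y0 [x1 H]]].
have gact : forall p z, gamma (actw (vprod_adj X eta) p z) = actw (vprod_adj X eta) p (gamma z).
  elim=> [|i p IH] z //=.
  by have := IH (vprod_adj X eta i z); rewrite /actw /= => ->; rewrite gcomm.
have CXY := PC X CX.
have snd : forall z, (gamma z).2 = z.2.
  move=> z; have [p hp] := CXY (x0, y0) z.
  by rewrite -hp gact H !actw_vprod.
pose alpha x := (gamma (x, y0)).1.
have ga : forall x, gamma (x, y0) = (alpha x, y0).
  by move=> x; rewrite [LHS]surjective_pairing snd.
have ccom : forall p, actw (@adj m Y) p y0 = y0 ->
    forall x, alpha (actw (@adj n X) (Ew eta y0 p) x) = actw (@adj n X) (Ew eta y0 p) (alpha x).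
  move=> p hp x; have := gact p (x, y0).
  by rewrite ga !actw_vprod hp ga => -[].
have acom : forall j x, alpha (adj j x) = adj j (alpha x).
  move=> j x.
  have [p hp] := PC (Cay n) (@Cay_conn n) (@cls n [::], y0) (@cls n [:: j], y0).
  rewrite actw_vprod actw_cls /= in hp; case: hp => hp1 hp2.
  have hE : coxeq (Ew eta y0 p) [:: j].
    by rewrite hp1; apply: rst_refl.
  have := ccom p hp2 x; rewrite !(actw_cox hE) => e; exact: e.
have acomw : forall q x, alpha (actw (@adj n X) q x) = actw (@adj n X) q (alpha x).
  elim=> [|i q IH] x //=.
  by have := IH (adj i x); rewrite /actw /= => ->; rewrite acom.
exists alpha; split.
- split; last exact: acom.
  case: gbij => g' gK Kg.
  exists (fun x => (g' (x, y0)).1).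
  + move=> x /=; rewrite -ga gK //.
  + move=> x /=.
    have e2 : (g' (x, y0)).2 = y0 by rewrite -snd Kg.
    have e : g' (x, y0) = ((g' (x, y0)).1, y0) by rewrite [LHS]surjective_pairing e2.
    by rewrite /alpha -e Kg.
- move=> x y.
  have [p hp] := CXY (x0, y0) (x0, y).
  rewrite actw_vprod in hp; case: hp => _ hp.
  set E := Ew eta y0 p.
  have ex : x = actw (@adj n X) E (actw (@adj n X) (rev E) x).
    have h : coxeq (rev E ++ E) [::] by have := cox_rev (rev E); rewrite revK.
    by rewrite -actw_cat (actw_cox h).
  have := gact p (actw (@adj n X) (rev E) x, y0).
  rewrite ga !actw_vprod -/E hp -ex -acomw -ex => ->; by [].
Qed.
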